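(* Let $m,n\in\mathbb{N}$, let $\Omega\subset\mathbb{R}^n$ be a bounded open set with smooth boundary, $\mathfrak{U}:=\mathbb{R}^m\times\Omega$, and $R>0$ with $\Omega\subseteq\{r<R\}$. Let $\varepsilon,a,b>0$ satisfy $a\ge(m+n)^2$, $a\gg R$, $\varepsilon\ll_{m,n}b\ll R^{-1}$, and let \[ \zeta_{a,b;\varepsilon}:=\left\{\frac{f}{(1+\varepsilon u)(1-\varepsilon v)}\exp\left[\frac{2bf^{1/2}}{(1-\varepsilon u)^{1/2}(1+\varepsilon v)^{1/2}}\right]\right\}^{2a}. \] Then on $\mathfrak{U}\cap\mathfrak{D}$, for every Cartesian coordinate index $\alpha$, \[ |\nabla^\alpha\zeta_{a,b;\varepsilon}|\lesssim aR\,\zeta_{a,b;\varepsilon}f^{-1}. \]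
   Context: On $\mathbb{R}^{m+n}$ with Cartesian coordinates $t\in\mathbb{R}^m$, $x\in\mathbb{R}^n$ and flat metric $g=-\sum dt_i^2+\sum dx_j^2$ (indices raised with $g$): $r=|x|$, $\tau=|t|$, $u=\frac12(\tau-r)$, $v=\frac12(\tau+r)$, $f=-uv=\frac14(|x|^2-|t|^2)$, $\mathfrak{D}=\{f>0\}$. $A\lesssim B$ means $A\le CB$ for some constant $C>0$; $A\gg B$ means $A\ge KB$ for sufficiently large $K$; $A\ll_{m,n}B$ means $A\le cB$ with $c>0$ sufficiently small depending on $m,n$, and $A\ll B$ analogously with an absolute constant. *)

(* Defs.v *)
From HB Require Import structures.
From mathcomp Require Import all_boot all_order all_algebra.
From mathcomp Require Import all_classical all_reals all_analysis.
Set Implicit Arguments. Unset Strict Implicit. Unset Printing Implicit Defensive.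
Import Order.TTheory GRing.Theory Num.Theory.
Import numFieldNormedType.Exports.
Local Open Scope classical_set_scope.
Local Open Scope ring_scope.

Section Defs.
Variable R : realType.

Definition enorm (k : nat) (y : 'rV[R]_k) : R :=
  Num.sqrt (\sum_(i < k) y ord0 i ^+ 2).

Definition ebasis (k : nat) (i : 'I_k) : 'rV[R]_k := delta_mx ord0 i.

Definition partial (k : nat) (i : 'I_k) (g : 'rV[R]_k -> R) : 'rV[R]_k -> R :=
  fun y => derive g y (ebasis i).

Definition iter_partial (k : nat) (js : seq 'I_k) (g : 'rV[R]_k -> R) :=
  foldr (fun j h => partial j h) g js.

Definition smooth_fun (k : nat) (g : 'rV[R]_k -> R) : Prop :=
  forall (js : seq 'I_k) (j : 'I_k) (y : 'rV[R]_k),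
    derivable (iter_partial js g) y (ebasis j).

Definition smooth_boundary (k : nat) (O : set 'rV[R]_k) : Prop :=
  forall p, closure O p -> ~ O p ->
    exists (r : R) (rho : 'rV[R]_k -> R),
      0 < r /\ smooth_fun rho /\ rho p = 0 /\
      (exists j, partial j rho p != 0) /\
      (forall y, ball p r y -> (O y <-> rho y < 0)).

Definition tpart (m n : nat) (p : 'rV[R]_(m + n)) : 'rV[R]_m := lsubmx p.
Definition xpart (m n : nat) (p : 'rV[R]_(m + n)) : 'rV[R]_n := rsubmx p.

Definition rr (m n : nat) (p : 'rV[R]_(m + n)) : R := enorm (xpart p).
Definition tau (m n : nat) (p : 'rV[R]_(m + n)) : R := enorm (tpart p).
Definition uu (m n : nat) (p : 'rV[R]_(m + n)) : R := (tau p - rr p) / 2.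
Definition vv (m n : nat) (p : 'rV[R]_(m + n)) : R := (tau p + rr p) / 2.
Definition ff (m n : nat) (p : 'rV[R]_(m + n)) : R := - (uu p * vv p).

Definition zeta (m n : nat) (a b eps : R) (p : 'rV[R]_(m + n)) : R :=
  ((ff p / ((1 + eps * uu p) * (1 - eps * vv p))) *
    expR (2 * b * Num.sqrt (ff p) /
          (Num.sqrt (1 - eps * uu p) * Num.sqrt (1 + eps * vv p)))) `^ (2 * a).

Definition ginv (m n : nat) (al : 'I_(m + n)) : R :=
  if (al < m)%N then -1 else 1.

(* nabla^alpha g = g^{alpha beta} d_beta g (flat metric, Cartesian coords). *)
Definition nabla_up (m n : nat) (al : 'I_(m + n)) (g : 'rV[R]_(m + n) -> R)
  : 'rV[R]_(m + n) -> R :=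
  fun p => ginv al * partial al g p.

End Defs.

Arguments enorm {R k}.
Arguments ebasis {R k}.
Arguments partial {R k}.
Arguments iter_partial {R k}.
Arguments smooth_fun {R k}.
Arguments smooth_boundary {R k}.
Arguments tpart {R m n}.
Arguments xpart {R m n}.
Arguments rr {R m n}.
Arguments tau {R m n}.
Arguments uu {R m n}.
Arguments vv {R m n}.
Arguments ff {R m n}.
Arguments zeta {R m n}.
Arguments ginv {R m n}.
Arguments nabla_up {R m n}.

(* Main.v *)
Require Import Defs.
From HB Require Import structures.
From mathcomp Require Import all_boot all_order all_algebra.
From mathcomp Require Import all_classical all_reals all_analysis.
From mathcomp Require Import ring lra zify.
Import Order.TTheory GRing.Theory Num.Theory.
Import numFieldNormedType.Exports.
Local Open Scope classical_set_scope.
Local Open Scope ring_scope.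


Section W.
Context {R : realType}.
Implicit Types (A B : R -> R) (x : R).

Lemma Dmul A B x dA dB : is_derive x 1 A dA -> is_derive x 1 B dB ->
  is_derive x 1 (fun h => A h * B h) (A x * dB + B x * dA).
Proof. move=> HA HB; exact: (is_deriveM HA HB). Qed.

Lemma Dadd A B x dA dB : is_derive x 1 A dA -> is_derive x 1 B dB ->
  is_derive x 1 (fun h => A h + B h) (dA + dB).
Proof. move=> HA HB; exact: (is_deriveD HA HB). Qed.

Lemma Dsub A B x dA dB : is_derive x 1 A dA -> is_derive x 1 B dB ->
  is_derive x 1 (fun h => A h - B h) (dA - dB).
Proof. move=> HA HB; exact: (is_deriveB HA HB). Qed.

Lemma Dcst (k : R) x : is_derive x 1 (fun _ => k) 0.
Proof. exact: is_derive_cst. Qed.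

Lemma Did x : is_derive x 1 (fun h : R => h) 1.
Proof. exact: is_derive_id. Qed.

Lemma Dinv A x dA : is_derive x 1 A dA -> A x != 0 ->
  is_derive x 1 (fun h => (A h)^-1) (- (A x)^-2 * dA).
Proof. move=> HA H; exact: (is_deriveV H HA). Qed.

Lemma Dsqrt A x dA : is_derive x 1 A dA -> 0 < A x ->
  is_derive x 1 (fun h => Num.sqrt (A h)) ((2 * Num.sqrt (A x))^-1 * dA).
Proof. move=> HA H; exact: (is_derive1_comp (is_derive1_sqrt H) HA). Qed.

Lemma Dexp A x dA : is_derive x 1 A dA ->
  is_derive x 1 (fun h => expR (A h)) (expR (A x) * dA).
Proof. move=> HA; exact: (is_derive1_comp (is_derive_expR _) HA). Qed.

Lemma Dpow (c : R) A x dA : is_derive x 1 A dA -> 0 < A x ->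
  is_derive x 1 (fun h => A h `^ c) ((c * A x `^ (c - 1)) * dA).
Proof. move=> HA H; exact: (is_derive1_comp (is_derive1_powR c H) HA). Qed.
End W.
Arguments Dmul {R A B x dA dB}.
Arguments Dadd {R A B x dA dB}.
Arguments Dsub {R A B x dA dB}.
Arguments Dinv {R A x dA}.
Arguments Dsqrt {R A x dA}.
Arguments Dexp {R A x dA}.
Arguments Dpow {R} c {A x dA}.


Section C.
Context {R : realType}.

Definition Zf (eps b c x y : R) : R :=
  ((y / (1 - eps * x + eps ^+ 2 * y)) *
    expR (2 * b * Num.sqrt y / Num.sqrt (1 + eps * x + eps ^+ 2 * y))) `^ c.

Lemma core_derive (eps b c : R) (Rf Ff : R -> R) dR dF :
  is_derive (0:R) (1:R) Rf dR -> is_derive (0:R) (1:R) Ff dF ->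
  0 < Ff 0 -> 0 < 1 - eps * Rf 0 + eps ^+ 2 * Ff 0 ->
  0 < 1 + eps * Rf 0 + eps ^+ 2 * Ff 0 ->
  let B0 := 1 - eps * Rf 0 + eps ^+ 2 * Ff 0 in
  let D0 := 1 + eps * Rf 0 + eps ^+ 2 * Ff 0 in
  let s := Num.sqrt (Ff 0) in let q := Num.sqrt D0 in
  let base := Ff 0 / B0 * expR (2 * b * s / q) in
  let dB := eps ^+ 2 * dF - eps * dR in
  let dD := eps * dR + eps ^+ 2 * dF in
  let L := dF / Ff 0 - dB / B0 + 2 * b * ((2 * s)^-1 * dF * q^-1 + s * (- (q ^-2) * ((2 * q)^-1 * dD))) in
  is_derive (0:R) (1:R) (fun h => Zf eps b c (Rf h) (Ff h)) (c * base `^ c * L).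
Proof.
move=> HR HF F0 B0p D0p B0 D0 s q base dB dD L.
have hB : is_derive (0:R) (1:R) (fun h => 1 - eps * Rf h + eps ^+ 2 * Ff h) dB.
  apply: is_derive_eq. rewrite /dB. rewrite -![_ *: _]/(_ * _); ring.
have hD : is_derive (0:R) (1:R) (fun h => 1 + eps * Rf h + eps ^+ 2 * Ff h) dD.
  apply: is_derive_eq.
  rewrite /dD -![_ *: _]/(_ * _); ring.
have hQ : is_derive (0:R) (1:R) (fun h => Ff h * (1 - eps * Rf h + eps ^+ 2 * Ff h)^-1)
   (Ff 0 * (- B0 ^-2 * dB) + B0^-1 * dF).
  have b0 : 1 - eps * Rf 0 + eps ^+ 2 * Ff 0 != 0 by rewrite gt_eqF.
  exact: (Dmul HF (Dinv hB b0)).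
have hS : is_derive (0:R) (1:R) (fun h => Num.sqrt (1 + eps * Rf h + eps ^+ 2 * Ff h)) ((2 * q)^-1 * dD).
  exact: (Dsqrt hD D0p).
have hs : is_derive (0:R) (1:R) (fun h => Num.sqrt (Ff h)) ((2 * s)^-1 * dF).
  exact: (Dsqrt HF F0).
have hW : is_derive (0:R) (1:R) (fun h => 2 * b * Num.sqrt (Ff h) * (Num.sqrt (1 + eps * Rf h + eps ^+ 2 * Ff h))^-1)
   (2 * b * ((2 * s)^-1 * dF * q^-1 + s * (- (q ^-2) * ((2 * q)^-1 * dD)))).
  apply: is_derive_eq.
    have q0 : Num.sqrt (1 + eps * Rf 0 + eps ^+ 2 * Ff 0) != 0 by rewrite gt_eqF // sqrtr_gt0.
    exact: (Dmul (Dmul (Dcst _ _) hs) (Dinv hS q0)).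
  rewrite /= -/s -/q. ring.
have hE := Dexp hW.
have hBa := Dmul hQ hE.
have base0 : 0 < base.
  rewrite /base mulr_gt0 ?expR_gt0 // divr_gt0 //.
have hP := Dpow c hBa base0.
rewrite /Zf; apply: (is_derive_eq hP).
rewrite -/B0 -/D0 -/s -/q -/base.
have pB : base `^ (c - 1) = base `^ c / base.
  by rewrite powRB ?(gt_eqF base0) ?implybT // powRr1 ?ltW.
rewrite pB /base /L.
have F0n : Ff 0 != 0 by rewrite gt_eqF.
have B0n : B0 != 0 by rewrite gt_eqF.
have qn : q != 0 by rewrite gt_eqF // sqrtr_gt0.
have En : expR (2 * b * s / q) != 0 by rewrite gt_eqF // expR_gt0.
have sn : s != 0 by rewrite gt_eqF // sqrtr_gt0.
field.
by rewrite qn sn B0n F0n En.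
Qed.
End C.


Section Bd.
Context {R : realType}.

Lemma div_le (x y z w : R) : 0 < y -> 0 < w -> x * w <= z * y -> x / y <= z / w.
Proof. by move=> y0 w0 h; rewrite ler_pdivrMr // mulrAC ler_pdivlMr. Qed.

Lemma bound_abs (Rd eps b F0 B0 s q dF dB dD : R) :
  0 < Rd -> 0 < eps -> 0 < b -> 0 < s -> s ^+ 2 = F0 -> 2 * s <= Rd ->
  1 <= q -> 15 <= 16 * B0 -> `|dB| <= 2 * eps -> `|dD| <= 2 * eps ->
  2 * `|dF| <= Rd -> 16 * eps * Rd <= 1 -> 4 * b * Rd <= 1 ->
  `|dF / F0 - dB / B0 + 2 * b * ((2 * s)^-1 * dF * q^-1 + s * (- (q ^-2) * ((2 * q)^-1 * dD)))|
    <= Rd / F0.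
Proof.
move=> R0 e0 b0 s0 sF sR q1 hB hdB hdD hdF eR bR.
have F0p : 0 < F0 by rewrite -sF exprn_gt0.
have q0 : 0 < q by lra.
have B0p : 0 < B0 by lra.
have ss : 4 * s ^+ 2 <= Rd ^+ 2 by nra.
have T1 : `|dF / F0| <= Rd / (2 * F0).
  rewrite normrM normfV (gtr0_norm F0p) div_le ?mulr_gt0 //; nra.
have T2 : `|dB / B0| <= Rd / (8 * F0).
  rewrite normrM normfV (gtr0_norm B0p) div_le ?mulr_gt0 //.
  rewrite -sF.
  have h1 : `|dB| * (8 * s ^+ 2) <= (2 * eps) * (2 * Rd ^+ 2).
    by apply: ler_pM; rewrite ?normr_ge0 //; nra.
  apply: (le_trans h1); nra.
have T3 : `|2 * b * ((2 * s)^-1 * dF * q^-1)| <= Rd / (8 * F0).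
  rewrite !normrM !normfV (gtr0_norm b0) (gtr0_norm q0) (@ger0_norm _ 2) //.
  rewrite [`|2 * s|]gtr0_norm; last lra.
  have -> : 2 * b * ((2 * s)^-1 * `|dF| / q) = (b * `|dF|) / (s * q).
    by field; rewrite !gt_eqF.
  apply: div_le; rewrite ?mulr_gt0 // -sF.
  have h1 : 8 * (b * `|dF|) * s <= 8 * (b * (Rd / 2)) * (Rd / 2).
    have nF := normr_ge0 dF.
    by apply: ler_pM; nra.
  have h2 : 8 * (b * (Rd / 2)) * (Rd / 2) <= Rd / 2 by nra.
  have h3 : Rd / 2 <= Rd * q by nra.
  have h4 : 8 * (b * `|dF|) * s <= Rd * q by lra.
  have -> : b * `|dF| * (8 * s ^+ 2) = s * (8 * (b * `|dF|) * s) by ring.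
  rewrite [Rd * (s * q)]mulrCA; apply: ler_wpM2l; lra.
have T4 : `|2 * b * (s * (- (q ^-2) * ((2 * q)^-1 * dD)))| <= Rd / (8 * F0).
  have -> : 2 * b * (s * (- (q ^-2) * ((2 * q)^-1 * dD))) = - ((b * s * dD) / q ^+ 3).
    by field; rewrite gt_eqF.
  rewrite normrN normrM normfV (gtr0_norm (exprn_gt0 _ q0)) normrM.
  rewrite (gtr0_norm (mulr_gt0 b0 s0)).
  apply: div_le; rewrite ?mulr_gt0 ?exprn_gt0 // -sF.
  have nD := normr_ge0 dD.
  have bs : b * s <= b * (Rd / 2) by apply: ler_wpM2l; lra.
  have h1 : b * s * `|dD| <= b * (Rd / 2) * (2 * eps).
    by apply: ler_pM => //; rewrite ?mulr_ge0 // ltW.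
  have h2 : b * (Rd / 2) * (2 * eps) * (8 * s ^+ 2) <= b * (Rd / 2) * (2 * eps) * (2 * Rd ^+ 2).
    have P0 : 0 < b * (Rd / 2) * (2 * eps) by rewrite !mulr_gt0 ?invr_gt0.
    by apply: ler_wpM2l; [exact: ltW | lra].
  have h3 : b * (Rd / 2) * (2 * eps) * (2 * Rd ^+ 2) <= Rd.
    have -> : b * (Rd / 2) * (2 * eps) * (2 * Rd ^+ 2) = Rd * ((b * Rd) * (2 * (eps * Rd))) by field.
    rewrite -[X in _ <= X]mulr1; apply: ler_wpM2l; first lra.
    have : b * Rd <= 1/4 by lra.
    have : eps * Rd <= 1/16 by lra.
    have : 0 < b * Rd by rewrite mulr_gt0.
    have : 0 < eps * Rd by rewrite mulr_gt0.
    nra.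
  have q3 : 1 <= q ^+ 3 by rewrite exprn_ege1.
  have h4 : b * s * `|dD| * (8 * s ^+ 2) <= b * (Rd / 2) * (2 * eps) * (8 * s ^+ 2).
    by apply: ler_wpM2r; nra.
  have : Rd <= Rd * q ^+ 3 by rewrite -[X in X <= _]mulr1; apply: ler_wpM2l; lra.
  lra.
rewrite mulrDr.
set t := Rd / F0.
have e2 : Rd / (2 * F0) = t / 2 by rewrite /t; field; rewrite gt_eqF.
have e8 : Rd / (8 * F0) = t / 8 by rewrite /t; field; rewrite gt_eqF.
rewrite e2 in T1; rewrite e8 in T2 T3 T4.
set X1 := dF / F0 in T1 *. set X2 := dB / B0 in T2 *.
set X3 := 2 * b * _ in T3 *. set X4 := 2 * b * _ in T4 *.
have := ler_normD (X1 - X2 + X3) X4.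
have := ler_normD (X1 - X2) X3.
have := ler_normB X1 X2.
have : 0 <= t by rewrite /t divr_ge0 // ltW.
rewrite addrA; lra.
Qed.
End Bd.


Section G.
Context {R : realType}.

Lemma sum_sq_delta N (y w : 'I_N -> R) k h : (forall j, w j = (j == k)%:R) ->
  \sum_j (h * w j + y j) ^+ 2 = \sum_j y j ^+ 2 + 2 * h * y k + h ^+ 2.
Proof.
move=> hw; rewrite (bigD1 k) //= [in RHS](bigD1 k) //= hw eqxx.
rewrite (eq_bigr (fun j => y j ^+ 2)); last first.
  move=> j Hj; rewrite hw; case: eqP Hj => [->|_]; first by move=> /=; rewrite ?eqxx ?andbF.
  by rewrite mulr0 add0r.
rewrite /=.
ring.
Qed.

Lemma sum_sq_zero N (y w : 'I_N -> R) h : (forall j, w j = 0) ->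
  \sum_j (h * w j + y j) ^+ 2 = \sum_j y j ^+ 2.
Proof. by move=> hw; apply: eq_bigr => j _; rewrite hw mulr0 add0r. Qed.

Lemma sq_le_sum N (y : 'I_N -> R) k : y k ^+ 2 <= \sum_j y j ^+ 2.
Proof.
rewrite (bigD1 k) //= lerDl; apply: sumr_ge0 => j _; exact: sqr_ge0.
Qed.

Lemma abs_le_norm N (y : 'I_N -> R) k : `|y k| <= Num.sqrt (\sum_j y j ^+ 2).
Proof.
rewrite -sqrtr_sqr ler_sqrt ?sq_le_sum //; apply: sumr_ge0 => j _; exact: sqr_ge0.
Qed.

Lemma enorm_sq N (y : 'rV[R]_N) : enorm y ^+ 2 = \sum_j y ord0 j ^+ 2.
Proof. by rewrite /enorm sqr_sqrtr //; apply: sumr_ge0 => j _; exact: sqr_ge0. Qed.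

Lemma zetaE m n a b eps (p : 'rV[R]_(m + n)) (he : 0 <= eps) :
  zeta a b eps p = Zf eps b (2 * a) (rr p) (ff p).
Proof.
have v0 : 0 <= 1 + eps * vv p.
  have t0 : 0 <= tau p by apply: sqrtr_ge0.
  have r0 : 0 <= rr p by apply: sqrtr_ge0.
  rewrite /vv; set TT := tau p; set XX := rr p.
  by rewrite addr_ge0 // mulr_ge0 // divr_ge0 // addr_ge0.
have E1 : Num.sqrt (1 - eps * uu p) * Num.sqrt (1 + eps * vv p) = Num.sqrt (1 + eps * rr p + eps ^+ 2 * ff p).
  rewrite mulrC -(sqrtrM _ v0). apply: (f_equal Num.sqrt).
  by rewrite /ff /uu /vv; field.
have E2 : (1 + eps * uu p) * (1 - eps * vv p) = 1 - eps * rr p + eps ^+ 2 * ff p.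
  by rewrite /ff /uu /vv; field.
by rewrite /zeta /Zf E1 E2.
Qed.
Lemma derive_line k (f : 'rV[R]_k -> R) p e :
  derive f p e = derive (fun h : R => f (h *: e + p)) 0 1.
Proof.
rewrite /derive; set g1 := fun h => h^-1 *: _; set g2 := fun h => h^-1 *: _.
suff -> : g1 = g2 by [].
by rewrite funeqE /g1 /g2 => h /=; rewrite addr0 scale0r add0r [_%:A]mulr1.
Qed.
End G.


Section H.
Context {R : realType}.

Lemma core_full (Rd eps b c : R) (Rf Ff : R -> R) dR dF :
  is_derive (0:R) (1:R) Rf dR -> is_derive (0:R) (1:R) Ff dF ->
  0 < Rd -> 0 < eps -> 0 < b -> 0 < c -> 16 * eps * Rd <= 1 -> 4 * b * Rd <= 1 ->
  0 <= Rf 0 -> Rf 0 <= Rd -> 0 < Ff 0 -> 4 * Ff 0 <= Rd ^+ 2 -> `|dR| <= 1 -> 2 * `|dF| <= Rd ->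
  `|derive (fun h => Zf eps b c (Rf h) (Ff h)) 0 1| <= c * Zf eps b c (Rf 0) (Ff 0) * (Rd / Ff 0).
Proof.
move=> HR HF R0 e0 b0 c0 eR bR r0 rR F0 F0R dR1 dFR.
have er : eps * Rf 0 <= 1 / 16.
  have : eps * Rf 0 <= eps * Rd by apply: ler_wpM2l; lra.
  lra.
have eF : 0 <= eps ^+ 2 * Ff 0 by rewrite mulr_ge0 ?sqr_ge0 // ltW.
have er0 : 0 <= eps * Rf 0 by rewrite mulr_ge0 // ltW.
have B0p : 0 < 1 - eps * Rf 0 + eps ^+ 2 * Ff 0 by lra.
have D0p : 0 < 1 + eps * Rf 0 + eps ^+ 2 * Ff 0 by lra.
have H := @core_derive R eps b c Rf Ff dR dF HR HF F0 B0p D0p.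
case: H => _ ->.
rewrite normrM (ger0_norm (_ : 0 <= c * _)); last by rewrite mulr_ge0 ?powR_ge0 // ltW.
apply: ler_wpM2l; first by rewrite mulr_ge0 ?powR_ge0 // ltW.
have s0 : 0 < Num.sqrt (Ff 0) by rewrite sqrtr_gt0.
have sF : Num.sqrt (Ff 0) ^+ 2 = Ff 0 by rewrite sqr_sqrtr // ltW.
have sR : 2 * Num.sqrt (Ff 0) <= Rd.
  move: sF; set s := Num.sqrt (Ff 0) => sF.
  nra.
have q1 : 1 <= Num.sqrt (1 + eps * Rf 0 + eps ^+ 2 * Ff 0).
  rewrite -[X in X <= _]sqrtr1 ler_sqrt; lra.
have nR := normr_ge0 dR. have nF := normr_ge0 dF.
have e2F : eps ^+ 2 * `|dF| <= eps.
  have : eps * `|dF| <= 1 / 32.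
    have : eps * (2 * `|dF|) <= eps * Rd by apply: ler_wpM2l; lra.
    lra.
  move=> h; rewrite expr2 -mulrA; have : eps * (eps * `|dF|) <= eps * (1/32) by apply: ler_wpM2l; lra.
  lra.
have eRR : eps * `|dR| <= eps by have := ler_wpM2l (ltW e0) dR1; rewrite mulr1.
have hdB : `|eps ^+ 2 * dF - eps * dR| <= 2 * eps.
  apply: (le_trans (ler_normB _ _)); rewrite !normrM ?normrX (ger0_norm (ltW e0)); lra.
have hdD : `|eps * dR + eps ^+ 2 * dF| <= 2 * eps.
  apply: (le_trans (ler_normD _ _)); rewrite !normrM ?normrX (ger0_norm (ltW e0)); lra.
apply: (bound_abs _ _ _ _ _ _ _ _ _ _ R0 e0 b0 s0 sF sR q1 _ hdB hdD) => //; lra.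
Qed.
End H.


Section M.
Context {R : realType}.

Lemma xpart_entry m n (p e : 'rV[R]_(m + n)) h j :
  (xpart (h *: e + p)) ord0 j = h * e ord0 (rshift m j) + (xpart p) ord0 j.
Proof. by rewrite /xpart !mxE. Qed.

Lemma tpart_entry m n (p e : 'rV[R]_(m + n)) h j :
  (tpart (h *: e + p)) ord0 j = h * e ord0 (lshift n j) + (tpart p) ord0 j.
Proof. by rewrite /tpart !mxE. Qed.

Lemma ebasis_entry k (al i : 'I_k) : (ebasis al : 'rV[R]_k) ord0 i = (i == al)%:R.
Proof. by rewrite /ebasis mxE eqxx. Qed.

Lemma ff_sq m n (p : 'rV[R]_(m + n)) : ff p = (rr p ^+ 2 - tau p ^+ 2) / 4.
Proof. by rewrite /ff /uu /vv; field. Qed.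

Lemma rr_line m n (p e : 'rV[R]_(m + n)) h :
  rr (h *: e + p) = Num.sqrt (\sum_j (h * e ord0 (rshift m j) + (xpart p) ord0 j) ^+ 2).
Proof. by rewrite /rr /enorm; congr Num.sqrt; apply: eq_bigr => j _; rewrite xpart_entry. Qed.

Lemma tau_line m n (p e : 'rV[R]_(m + n)) h :
  tau (h *: e + p) = Num.sqrt (\sum_j (h * e ord0 (lshift n j) + (tpart p) ord0 j) ^+ 2).
Proof. by rewrite /tau /enorm; congr Num.sqrt; apply: eq_bigr => j _; rewrite tpart_entry. Qed.

Lemma Dquad (A0 a1 : R) : is_derive (0:R) (1:R) (fun h => A0 + 2 * h * a1 + h ^+ 2) (2 * a1).
Proof. by apply: is_derive_eq; rewrite -![_ *: _]/(_ * _); ring. Qed.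

Lemma sum_ge0sq N (y : 'I_N -> R) : 0 <= \sum_j y j ^+ 2.
Proof. by apply: sumr_ge0 => j _; exact: sqr_ge0. Qed.

Lemma line_derivs m n (p : 'rV[R]_(m + n)) (al : 'I_(m + n)) : 0 < ff p ->
  exists dR dF : R, [/\ is_derive (0:R) (1:R) (fun h => rr (h *: ebasis al + p)) dR,
                is_derive (0:R) (1:R) (fun h => ff (h *: ebasis al + p)) dF,
                `|dR| <= 1 & 2 * `|dF| <= rr p].
Proof.
move=> f0.
set e := ebasis al.
set Sx := \sum_j (xpart p) ord0 j ^+ 2.
set St := \sum_j (tpart p) ord0 j ^+ 2.
have rrp : rr p = Num.sqrt Sx by [].
have tp : tau p = Num.sqrt St by [].
have Sx0 : 0 <= Sx by apply: sum_ge0sq.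
have St0 : 0 <= St by apply: sum_ge0sq.
have r0 : 0 <= rr p by apply: sqrtr_ge0.
have t0 : 0 <= tau p by apply: sqrtr_ge0.
have tr : tau p < rr p.
  move: f0; rewrite ff_sq => f0; nra.
have Sxp : 0 < Sx by rewrite -sqrtr_gt0 -rrp; lra.
case: (splitP al) => [j0 Hj | k0 Hk].
- have wx : forall j, e ord0 (rshift m j) = 0.
    move=> j; rewrite ebasis_entry (_ : (rshift m j == al) = false) //.
    apply/negbTE/eqP => /(congr1 val) /=; rewrite Hj; have := ltn_ord j0; lia.
  have wt : forall j, e ord0 (lshift n j) = (j == j0)%:R.
    move=> j; rewrite ebasis_entry.
    suff -> : (lshift n j == al) = (j == j0) by [].
    apply/idP/idP => /eqP H; apply/eqP.
      by apply: val_inj; move/(congr1 val): H; rewrite /= Hj.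
    by apply: val_inj; rewrite /= H Hj.
  set x0 := (tpart p) ord0 j0.
  exists 0, ((0 - 2 * x0) * 4^-1); split.
  + have -> : (fun h => rr (h *: e + p)) = (fun _ => rr p).
      by apply: funext => h; rewrite rr_line (sum_sq_zero _ _ _ _ wx).
    exact: Dcst.
  + have -> : (fun h => ff (h *: e + p)) = (fun h => (Sx - (St + 2 * h * x0 + h ^+ 2)) * 4^-1).
      apply: funext => h; rewrite ff_sq rr_line tau_line !sqr_sqrtr ?sum_ge0sq //.
      by rewrite (sum_sq_zero _ _ _ _ wx) (sum_sq_delta _ _ _ _ _ wt).
    apply: (is_derive_eq (Dmul (Dsub (Dcst Sx _) (Dquad St x0)) (Dcst 4^-1 _))).
    by rewrite /=; ring.
  + by rewrite normr0.
  + have : `|x0| <= tau p by apply: abs_le_norm.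
    rewrite add0r normrM normrN normrM (ger0_norm (_ : 0 <= 4^-1)) ?invr_ge0 // (ger0_norm (_ : 0 <= 2)) //.
    lra.
- have wt : forall j, e ord0 (lshift n j) = 0.
    move=> j; rewrite ebasis_entry (_ : (lshift n j == al) = false) //.
    apply/negbTE/eqP => /(congr1 val) /=; rewrite Hk; have := ltn_ord j; lia.
  have wx : forall j, e ord0 (rshift m j) = (j == k0)%:R.
    move=> j; rewrite ebasis_entry.
    suff -> : (rshift m j == al) = (j == k0) by [].
    apply/idP/idP => /eqP H; apply/eqP.
      by apply: val_inj; move/(congr1 val): H; rewrite /= Hk => /addnI.
    by apply: val_inj; rewrite /= H Hk.
  set x0 := (xpart p) ord0 k0.
  exists ((2 * Num.sqrt Sx)^-1 * (2 * x0)), ((2 * x0 - 0) * 4^-1); split.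
  + have -> : (fun h => rr (h *: e + p)) = (fun h => Num.sqrt (Sx + 2 * h * x0 + h ^+ 2)).
      by apply: funext => h; rewrite rr_line (sum_sq_delta _ _ _ _ _ wx).
    have P0 : 0 < Sx + 2 * 0 * x0 + 0 ^+ 2 by rewrite mulr0 mul0r expr0n /= !addr0.
    have H := Dsqrt (Dquad Sx x0) P0.
    by move: H; rewrite mulr0 mul0r expr0n /= !addr0.
  + have -> : (fun h => ff (h *: e + p)) = (fun h => ((Sx + 2 * h * x0 + h ^+ 2) - St) * 4^-1).
      apply: funext => h; rewrite ff_sq rr_line tau_line !sqr_sqrtr ?sum_ge0sq //.
      by rewrite (sum_sq_zero _ _ _ _ wt) (sum_sq_delta _ _ _ _ _ wx).
    apply: (is_derive_eq (Dmul (Dsub (Dquad Sx x0) (Dcst St _)) (Dcst 4^-1 _))).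
    by rewrite /=; ring.
  + have : `|x0| <= Num.sqrt Sx by apply: abs_le_norm.
    have sq0 : 0 < Num.sqrt Sx by rewrite sqrtr_gt0.
    rewrite normrM normfV normrM (ger0_norm (_ : 0 <= 2)) // (ger0_norm (ltW sq0)) normrM (ger0_norm (_ : 0 <= 2)) //.
    move=> h.
    have -> : (2 * Num.sqrt Sx)^-1 * (2 * `|x0|) = `|x0| / Num.sqrt Sx by field; rewrite gt_eqF.
    by rewrite ler_pdivrMr // mul1r.
  + have : `|x0| <= rr p by apply: abs_le_norm.
    rewrite subr0 normrM normrM (ger0_norm (_ : 0 <= 4^-1)) ?invr_ge0 // (ger0_norm (_ : 0 <= 2)) //.
    lra.
Qed.
End M.

Theorem lemma3p14 (R : realType) :
  exists (K c2 C : R), 0 < K /\ 0 < c2 /\ 0 < C /\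
  forall m n : nat, exists c1 : R, 0 < c1 /\
  forall (Om : set 'rV[R]_n) (Rd eps a b : R),
    open Om -> bounded_set Om -> smooth_boundary Om ->
    0 < Rd -> (forall x, Om x -> enorm x < Rd) ->
    0 < eps -> 0 < a -> 0 < b ->
    ((m + n) ^ 2)%:R <= a -> K * Rd <= a ->
    eps <= c1 * b -> b <= c2 / Rd ->
    forall p : 'rV[R]_(m + n), Om (xpart p) -> 0 < ff p ->
    forall al : 'I_(m + n),
      derivable (zeta a b eps) p (ebasis al) ->
      `|nabla_up al (zeta a b eps) p| <= C * a * Rd * zeta a b eps p / ff p.
Proof.
exists 1, (1/4), 2; split; [lra|split; [lra|split; [lra|]]].
move=> m n; exists (1/4); split; first lra.
move=> Om Rd eps a b _ _ _ R0 HOm e0 a0 b0 _ _ ec1 bc2 p Hp f0 al _.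
have rRd : rr p < Rd by apply: HOm.
have [dR [dF [HR HF HdR HdF]]] := @line_derivs R m n p al f0.
have bR : 4 * b * Rd <= 1.
  by move: bc2; rewrite ler_pdivlMr // => h; lra.
have eR : 16 * eps * Rd <= 1.
  have : eps * Rd <= 1 / 4 * b * Rd by rewrite -mulrA [X in _ <= X]mulrA ler_wpM2r // ltW.
  lra.
have r0 : 0 <= rr p by apply: sqrtr_ge0.
have F0R : 4 * ff p <= Rd ^+ 2.
  rewrite ff_sq; have := sqr_ge0 (tau p); nra.
have c0 : 0 < 2 * a by lra.
have E0 : 0 *: ebasis al + p = p by rewrite scale0r add0r.
have := @core_full R Rd eps b (2 * a) _ _ dR dF HR HF R0 e0 b0 c0 eR bR.
rewrite /= E0 => /(_ r0 (ltW rRd) f0 F0R HdR (le_trans HdF (ltW rRd))) Hb.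
rewrite /nabla_up /partial normrM.
have -> : `|ginv al| = 1 :> R by rewrite /ginv; case: ifP => _; rewrite ?normrN normr1.
rewrite mul1r derive_line.
have -> : (fun h : R => zeta a b eps (h *: ebasis al + p)) =
          (fun h => Zf eps b (2 * a) (rr (h *: ebasis al + p)) (ff (h *: ebasis al + p))).
  by apply: funext => h; rewrite zetaE // ltW.
apply: (le_trans Hb).
rewrite (@zetaE R m n a b eps p (ltW e0)) le_eqVlt; apply/orP; left; apply/eqP; ring.
Qed.
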